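(* Let $\mathcal P$ be as in the context. Let $\mathcal P'$ be the set of $(\mathbf x',\mathbf y')=((x'_1,\dots,x'_T),(y'_1,\dots,y'_T))\in\mathbb R_+^T\times\{0,1\}^T$ satisfying: $-y'_{T-t+2}+y'_{T-t+1}-y'_{T-k+1}\le 0$ for all $t\in[2,T]_{\mathbb Z}$, $k\in[t,\min\{T,t+L-1\}]_{\mathbb Z}$; $y'_{T-t+2}-y'_{T-t+1}+y'_{T-k+1}\le 1$ for all $t\in[2,T]_{\mathbb Z}$, $k\in[t,\min\{T,t+\ell-1\}]_{\mathbb Z}$; $-x'_{T-t+1}+\underline C y'_{T-t+1}\le 0$ and $x'_{T-t+1}-\overline C y'_{T-t+1}\le 0$ for all $t\in[1,T]_{\mathbb Z}$; $x'_{T-t+1}-x'_{T-t+2}\le Vy'_{T-t+2}+\overline V(1-y'_{T-t+2})$ for all $t\in[2,T]_{\mathbb Z}$; $x'_{T-t+2}-x'_{T-t+1}\le Vy'_{T-t+1}+\overline V(1-y'_{T-t+1})$ for all $t\in[2,T]_{\mathbb Z}$. Then $\mathcal P=\mathcal P'$ (as subsets of $\mathbb R^{T}\times\mathbb R^{T}$).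
   Context: For integers $a,b$, $[a,b]_{\mathbb Z}=\{a,a+1,\dots,b\}$ if $a\le b$ and $\emptyset$ otherwise. Fix a positive integer $T$, positive integers $L$ (minimum up time) and $\ell$ (minimum down time), and reals $\overline C,\underline C,V,\overline V$ with $\overline C>\underline C>0$, $V>0$, $\overline V+V\le\overline C$ and $\underline C<\overline V<\underline C+V$. $\mathcal P$ is the set of $(\mathbf x,\mathbf y)=((x_1,\dots,x_T),(y_1,\dots,y_T))\in\mathbb R_+^T\times\{0,1\}^T$ satisfying: (i) $-y_{t-1}+y_t-y_k\le 0$ for all $t\in[2,T]_{\mathbb Z}$, $k\in[t,\min\{T,t+L-1\}]_{\mathbb Z}$; (ii) $y_{t-1}-y_t+y_k\le 1$ for all $t\in[2,T]_{\mathbb Z}$, $k\in[t,\min\{T,t+\ell-1\}]_{\mathbb Z}$; (iii) $-x_t+\underline C y_t\le 0$ and $x_t-\overline C y_t\le 0$ for all $t\in[1,T]_{\mathbb Z}$; (iv) $x_t-x_{t-1}\le Vy_{t-1}+\overline V(1-y_{t-1})$ for all $t\in[2,T]_{\mathbb Z}$; (v) $x_{t-1}-x_t\le Vy_t+\overline V(1-y_t)$ for all $t\in[2,T]_{\mathbb Z}$. *)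

(* Defs.v *)
(* Vectors in R^T are represented as functions nat -> R,
   only coordinates 1..T are meaningful (the constraints only mention them). *)
From HB Require Import structures.
From mathcomp Require Import all_boot all_order all_algebra.
Set Implicit Arguments. Unset Strict Implicit. Unset Printing Implicit Defensive.
Import Order.TTheory GRing.Theory Num.Theory.
Local Open Scope ring_scope.

Definition inP (R : realFieldType) (T L l : nat) (Cu Cl V Vb : R)
  (x y : nat -> R) : Prop :=
  (forall t, (1 <= t <= T)%N -> 0 <= x t /\ (y t = 0 \/ y t = 1)) /\
  (forall t k, (2 <= t <= T)%N -> (t <= k <= minn T (t + L - 1))%N ->
     - y (t - 1)%N + y t - y k <= 0) /\
  (forall t k, (2 <= t <= T)%N -> (t <= k <= minn T (t + l - 1))%N ->
     y (t - 1)%N - y t + y k <= 1) /\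
  (forall t, (1 <= t <= T)%N -> - x t + Cl * y t <= 0 /\ x t - Cu * y t <= 0) /\
  (forall t, (2 <= t <= T)%N ->
     x t - x (t - 1)%N <= V * y (t - 1)%N + Vb * (1 - y (t - 1)%N)) /\
  (forall t, (2 <= t <= T)%N ->
     x (t - 1)%N - x t <= V * y t + Vb * (1 - y t)).

Definition inP' (R : realFieldType) (T L l : nat) (Cu Cl V Vb : R)
  (x y : nat -> R) : Prop :=
  (forall t, (1 <= t <= T)%N -> 0 <= x t /\ (y t = 0 \/ y t = 1)) /\
  (forall t k, (2 <= t <= T)%N -> (t <= k <= minn T (t + L - 1))%N ->
     - y (T - t + 2)%N + y (T - t + 1)%N - y (T - k + 1)%N <= 0) /\
  (forall t k, (2 <= t <= T)%N -> (t <= k <= minn T (t + l - 1))%N ->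
     y (T - t + 2)%N - y (T - t + 1)%N + y (T - k + 1)%N <= 1) /\
  (forall t, (1 <= t <= T)%N ->
     - x (T - t + 1)%N + Cl * y (T - t + 1)%N <= 0 /\
     x (T - t + 1)%N - Cu * y (T - t + 1)%N <= 0) /\
  (forall t, (2 <= t <= T)%N ->
     x (T - t + 1)%N - x (T - t + 2)%N
       <= V * y (T - t + 2)%N + Vb * (1 - y (T - t + 2)%N)) /\
  (forall t, (2 <= t <= T)%N ->
     x (T - t + 2)%N - x (T - t + 1)%N
       <= V * y (T - t + 1)%N + Vb * (1 - y (T - t + 1)%N)).

(* Main.v *)
Require Import Defs.
From HB Require Import structures.
From mathcomp Require Import all_boot all_order all_algebra.
From mathcomp Require Import zify ring lra.
Import Order.TTheory GRing.Theory Num.Theory.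
Local Open Scope ring_scope.

Set Implicit Arguments. Unset Strict Implicit.
Section Aux.
Variable R : realFieldType.

Definition bin (T : nat) (w : nat -> R) := forall t, (1 <= t <= T)%N -> w t = 0 \/ w t = 1.
Definition C1 (T L : nat) (w : nat -> R) := forall t k, (2 <= t <= T)%N ->
  (t <= k <= minn T (t + L - 1))%N -> - w (t - 1)%N + w t - w k <= 0.
Definition Q (T L : nat) (w : nat -> R) := forall p m q, (1 <= p)%N -> (p < m)%N ->
  (m < q)%N -> (q <= T)%N -> (q <= p + L)%N -> w p = 0 -> w q = 0 -> w m = 0.

Lemma C1_Q T L w : bin T w -> C1 T L w -> Q T L w.
Proof.
move=> hb hc p m q h1 hpm hmq hqT hqL wp wq.
have hm : (1 <= m <= T)%N by lia.
case: (hb m hm) => // wm1; exfalso.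
elim: m hpm hmq hm wm1 => [|m IH] hpm hmq hm wm1; first by lia.
have hm' : (1 <= m <= T)%N by lia.
case: (hb m hm') => wm.
- have := hc m.+1 q ltac:(lia) ltac:(lia).
  have -> : (m.+1 - 1 = m)%N by lia.
  rewrite wm wm1 wq; lra.
- case: (eqVneq m p) => [E|ne].
  + by move: wm; rewrite E wp => /eqP; rewrite eq_sym oner_eq0.
  + apply: IH => //; lia.
Qed.

Lemma Q_C1 T L w : (0 < L)%N -> bin T w -> Q T L w -> C1 T L w.
Proof.
move=> hL hb hq t k ht hk.
have ht1 : (1 <= t - 1 <= T)%N by lia.
have ht' : (1 <= t <= T)%N by lia.
have hk' : (1 <= k <= T)%N by lia.
case: (hb _ ht1) => a; case: (hb _ ht') => b; case: (hb _ hk') => c;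
  rewrite a b c; try lra.
case: (eqVneq t k) => [E|ne]; first by move: b; rewrite E c => /eqP; rewrite eq_sym oner_eq0.
have := hq (t - 1)%N t k ltac:(lia) ltac:(lia) ltac:(lia) ltac:(lia) ltac:(lia) a c.
by rewrite b => /eqP; rewrite oner_eq0.
Qed.

Definition rv (T : nat) (w : nat -> R) := fun i => w (T + 1 - i)%N.

Lemma bin_rv T w : bin T w -> bin T (rv T w).
Proof. move=> hb t ht; apply: hb; lia. Qed.

Lemma Q_rv T L w : Q T L w -> Q T L (rv T w).
Proof.
rewrite /rv => hq p m q h1 hpm hmq hqT hqL wp wq.
apply: (hq (T + 1 - q)%N (T + 1 - m)%N (T + 1 - p)%N); try lia.
- done.
- done.
Qed.

Lemma C1_rv T L w : (0 < L)%N -> bin T w -> C1 T L w -> C1 T L (rv T w).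
Proof.
move=> hL hb hc; apply: Q_C1 => //; first exact: bin_rv.
apply: Q_rv; exact: C1_Q.
Qed.

Lemma rvK T w t : (1 <= t <= T)%N -> rv T (rv T w) t = w t.
Proof. move=> h; rewrite /rv; congr w; lia. Qed.

Lemma C1_ext T L w w' : (forall t, (1 <= t <= T)%N -> w t = w' t) -> C1 T L w -> C1 T L w'.
Proof.
move=> e hc t k ht hk; rewrite -!e; try lia; exact: hc.
Qed.

Lemma C1_rv_iff T L w : (0 < L)%N -> bin T w -> C1 T L w <-> C1 T L (rv T w).
Proof.
move=> hL hb; split; first exact: C1_rv.
move=> h; apply: (@C1_ext T L (rv T (rv T w))); first by move=> t; exact: rvK.
by apply: C1_rv => //; exact: bin_rv.
Qed.

Lemma C1_rv_expand T L w : C1 T L (rv T w) <-> (forall t k, (2 <= t <= T)%N ->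
  (t <= k <= minn T (t + L - 1))%N ->
  - w (T - t + 2)%N + w (T - t + 1)%N - w (T - k + 1)%N <= 0).
Proof.
rewrite /C1 /rv; split=> h t k ht hk; have := h t k ht hk.
- have -> : (T + 1 - (t - 1) = T - t + 2)%N by lia.
  have -> : (T + 1 - t = T - t + 1)%N by lia.
  have -> : (T + 1 - k = T - k + 1)%N by lia.
  done.
- have -> : (T + 1 - (t - 1) = T - t + 2)%N by lia.
  have -> : (T + 1 - t = T - t + 1)%N by lia.
  have -> : (T + 1 - k = T - k + 1)%N by lia.
  done.
Qed.

Lemma C2_iff T l (y : nat -> R) : (forall t k, (2 <= t <= T)%N ->
  (t <= k <= minn T (t + l - 1))%N -> y (t - 1)%N - y t + y k <= 1)
  <-> C1 T l (fun i => 1 - y i).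
Proof.
split=> h t k ht hk; have := h t k ht hk; lra.
Qed.

Lemma C2'_iff T l (y : nat -> R) : (forall t k, (2 <= t <= T)%N ->
  (t <= k <= minn T (t + l - 1))%N ->
  y (T - t + 2)%N - y (T - t + 1)%N + y (T - k + 1)%N <= 1)
  <-> C1 T l (rv T (fun i => 1 - y i)).
Proof.
rewrite C1_rv_expand; split=> h t k ht hk; have := h t k ht hk; lra.
Qed.

Lemma bin1 T (y : nat -> R) : bin T y -> bin T (fun i => 1 - y i).
Proof. move=> hb t ht; case: (hb t ht) => ->; [right|left]; ring. Qed.

End Aux.

Theorem lemma2 (R : realFieldType) (T L l : nat) (Cu Cl V Vb : R)
  (hT : (0 < T)%N) (hL : (0 < L)%N) (hl : (0 < l)%N)
  (hCuCl : Cl < Cu) (hCl : 0 < Cl) (hV : 0 < V) (hVbV : Vb + V <= Cu)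
  (hClVb : Cl < Vb) (hVbClV : Vb < Cl + V) :
  forall x y : nat -> R,
    inP T L l Cu Cl V Vb x y <-> inP' T L l Cu Cl V Vb x y.
Proof.
move=> x y.
have Hb : forall (P : Prop), ((forall t, (1 <= t <= T)%N -> 0 <= x t /\ (y t = 0 \/ y t = 1)) -> P) ->
   (forall t, (1 <= t <= T)%N -> 0 <= x t /\ (y t = 0 \/ y t = 1)) -> P by [].
split.
- case=> h0 [h1 [h2 [h3 [h4 h5]]]].
  have hb : bin T y by move=> t ht; case: (h0 t ht).
  split=> //; split.
    apply/C1_rv_expand; apply/(@C1_rv_iff R T L y hL hb); exact: h1.
  split.
    apply/C2'_iff; apply/(@C1_rv_iff R T l _ hl (bin1 hb)).
    exact/C2_iff.
  split.
    move=> t ht; apply: h3; lia.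
  split.
    move=> t ht; have := h5 (T - t + 2)%N ltac:(lia).
    by have -> : (T - t + 2 - 1 = T - t + 1)%N by lia.
  move=> t ht; have := h4 (T - t + 2)%N ltac:(lia).
  by have -> : (T - t + 2 - 1 = T - t + 1)%N by lia.
- case=> h0 [h1 [h2 [h3 [h4 h5]]]].
  have hb : bin T y by move=> t ht; case: (h0 t ht).
  split=> //; split.
    apply/(@C1_rv_iff R T L y hL hb); exact/C1_rv_expand.
  split.
    apply/C2_iff; apply/(@C1_rv_iff R T l _ hl (bin1 hb)); exact/C2'_iff.
  split.
    move=> t ht; have := h3 (T - t + 1)%N ltac:(lia).
    by have -> : (T - (T - t + 1) + 1 = t)%N by lia.
  split.
    move=> t ht; have := h5 (T - t + 2)%N ltac:(lia).
    have -> : (T - (T - t + 2) + 2 = t)%N by lia.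
    by have -> : (T - (T - t + 2) + 1 = t - 1)%N by lia.
  move=> t ht; have := h4 (T - t + 2)%N ltac:(lia).
  have -> : (T - (T - t + 2) + 2 = t)%N by lia.
  by have -> : (T - (T - t + 2) + 1 = t - 1)%N by lia.
Qed.
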